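(* Let $\{x_i,v_i\}_{i\in[N]}$ be the global solution of the delayed Cucker–Smale system described in the context, let $\beta>0$ and \[ G(t):=d_v(t)+\beta\int_{\max\{0,t-2\tau\}}^t e^{-(t-s)}\int_s^t\max_{i\in[N]}|\dot v_i(r)|\,\mathrm dr\,\mathrm ds,\qquad t\ge0. \] Then for all $i,j\in[N]$ and $t\ge2\tau$, \[ |v_j(t-\tau)-v_i(t-\sigma)|\le d_v(t-\tau)+\int_{t-\tau}^{t-\sigma}d_v(s-\tau)\,\mathrm ds+\beta^{-1}e^{2\tau}G(t-\sigma). \]
   Context: Let $N\ge2$, $d\ge1$ be integers, $[N]=\{1,\dots,N\}$, $0\le\sigma\le\tau$. Let $\psi:[0,\infty)\to[0,\infty)$ be continuous, nonincreasing, positive everywhere, with $\sup\psi\le1$. Given $x_i^0\in C^1([-\tau,0],\mathbb{R}^d)$, $v_i^0\in C([-\tau,0],\mathbb{R}^d)$ with $\frac{\mathrm d}{\mathrm dt}x_i^0=v_i^0$, $\{x_i,v_i\}$ is the global solution of $\dot x_i(t)=v_i(t)$, $\dot v_i(t)=\sum_{j\ne i}a_{ij}(t)(v_j(t-\tau)-v_i(t-\sigma))$ for $t>0$, with $a_{ij}(t)=\frac1{N-1}\psi(|x_i(t-\sigma)-x_j(t-\tau)|)$, and $x_i=x_i^0$, $v_i=v_i^0$ on $[-\tau,0]$ ($v_i$ continuously differentiable on $[0,\infty)$). $d_v(t):=\max_{i,j}|v_i(t)-v_j(t)|$. *)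

(* Defs.v *)
From Stdlib Require Import Reals Lra.
From Coquelicot Require Import Coquelicot.
Open Scope R_scope.

(* Vectors of R^d are represented as functions nat -> R, only coordinates 0..d-1 matter.
   Particles are indexed by 0..N-1. *)

Fixpoint sumn_R (n : nat) (f : nat -> R) : R :=
  match n with
  | O => 0
  | S m => sumn_R m f + f m
  end.

(* max_{k<n} f k  (with value 0 for n = 0; only used with nonnegative f and n >= 2) *)
Fixpoint maxn_R (n : nat) (f : nat -> R) : R :=
  match n with
  | O => 0
  | S O => f O
  | S m => Rmax (maxn_R m f) (f m)
  end.

Definition vnorm (d : nat) (u : nat -> R) : R :=
  sqrt (sumn_R d (fun k => u k ^ 2)).

Definition vsub (u w : nat -> R) : nat -> R := fun k => u k - w k.

Definition dv (N d : nat) (v : nat -> R -> nat -> R) (t : R) : R :=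
  maxn_R N (fun i => maxn_R N (fun j => vnorm d (vsub (v i t) (v j t)))).

Definition vderiv (f : R -> nat -> R) (r : R) : nat -> R :=
  fun k => Derive (fun s => f s k) r.

Definition maxvdot (N d : nat) (v : nat -> R -> nat -> R) (r : R) : R :=
  maxn_R N (fun i => vnorm d (vderiv (v i) r)).

Definition Gfun (N d : nat) (tau beta : R) (v : nat -> R -> nat -> R) (t : R) : R :=
  dv N d v t
  + beta * RInt (fun s => exp (- (t - s)) * RInt (fun r => maxvdot N d v r) s t)
                (Rmax 0 (t - 2 * tau)) t.

Definition aw (N d : nat) (sigma tau : R) (psi : R -> R) (x : nat -> R -> nat -> R)
  (i j : nat) (t : R) : R :=
  / INR (N - 1) * psi (vnorm d (vsub (x i (t - sigma)) (x j (t - tau)))).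

Definition rhs (N d : nat) (sigma tau : R) (psi : R -> R) (x v : nat -> R -> nat -> R)
  (i : nat) (t : R) (k : nat) : R :=
  sumn_R N (fun j => if Nat.eqb j i then 0
                     else aw N d sigma tau psi x i j t * (v j (t - tau) k - v i (t - sigma) k)).

(* Main.v *)
Require Import Defs.
From Stdlib Require Import Reals Lra Lia ClassicalEpsilon Arith.
From Coquelicot Require Import Coquelicot.
Open Scope R_scope.

Lemma sumn_ext n f g : (forall k, (k < n)%nat -> f k = g k) -> sumn_R n f = sumn_R n g.
Proof. induction n; simpl; intros H; auto. rewrite IHn by (intros; apply H; lia). rewrite H by lia; auto. Qed.

Lemma maxn_ext n f g : (forall k, (k < n)%nat -> f k = g k) -> maxn_R n f = maxn_R n g.
Proof. induction n; simpl; intros H; auto. destruct n. apply H; lia.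
  rewrite IHn by (intros; apply H; lia). rewrite (H (S n)) by lia; auto. Qed.

Lemma sumn_plus n f g : sumn_R n (fun k => f k + g k) = sumn_R n f + sumn_R n g.
Proof. induction n; simpl; [lra|]. rewrite IHn; lra. Qed.

Lemma sumn_scal n c f : sumn_R n (fun k => c * f k) = c * sumn_R n f.
Proof. induction n; simpl; [lra|]. rewrite IHn; lra. Qed.

Lemma sumn_le n f g : (forall k, (k < n)%nat -> f k <= g k) -> sumn_R n f <= sumn_R n g.
Proof. induction n; simpl; intros H; [lra|]. pose proof (H n ltac:(lia)). pose proof (IHn ltac:(intros; apply H; lia)). lra. Qed.

Lemma sumn_ge0 n f : (forall k, (k < n)%nat -> 0 <= f k) -> 0 <= sumn_R n f.
Proof. intros H. replace 0 with (sumn_R n (fun _ => 0)). apply sumn_le; auto.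
  clear H; induction n; simpl; auto; lra. Qed.

Lemma maxn_ge n f i : (i < n)%nat -> f i <= maxn_R n f.
Proof. induction n; intros H; [lia|]. simpl. destruct n. replace i with 0%nat by lia; lra.
  destruct (Nat.eq_dec i (S n)). subst. apply Rmax_r.
  eapply Rle_trans; [apply IHn; lia| apply Rmax_l]. Qed.

Lemma maxn_le n f c : (1 <= n)%nat -> (forall k, (k < n)%nat -> f k <= c) -> maxn_R n f <= c.
Proof. induction n; intros H1 H; [lia|]. simpl. destruct n. apply H; lia.
  apply Rmax_lub. apply IHn; [lia|intros; apply H; lia]. apply H; lia. Qed.

Lemma sumn_count n i c : sumn_R n (fun j => if Nat.eqb j i then 0 else c) =
  (if Nat.ltb i n then INR n - 1 else INR n) * c.
Proof. induction n as [|n IHn]; cbn [sumn_R]. rewrite (proj2 (Nat.ltb_nlt i 0)) by lia; simpl; lra.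
  rewrite IHn. destruct (Nat.eqb n i) eqn:E.
  apply Nat.eqb_eq in E; subst i. rewrite (proj2 (Nat.ltb_nlt n n)) by lia.
  rewrite (proj2 (Nat.ltb_lt n (S n))) by lia. rewrite S_INR. lra.
  apply Nat.eqb_neq in E. destruct (Nat.ltb i n) eqn:E1.
  apply Nat.ltb_lt in E1. rewrite (proj2 (Nat.ltb_lt i (S n))) by lia. rewrite S_INR. lra.
  apply Nat.ltb_nlt in E1. rewrite (proj2 (Nat.ltb_nlt i (S n))) by lia. rewrite S_INR. lra.
Qed.

Definition dot d (u w : nat -> R) := sumn_R d (fun k => u k * w k).

Lemma sq_sum_eq d u : sumn_R d (fun k => u k ^ 2) = dot d u u.
Proof. apply sumn_ext; intros; simpl; ring. Qed.

Lemma dot_ge0 d u : 0 <= dot d u u.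
Proof. apply sumn_ge0; intros. nra. Qed.

Lemma vnorm_ge0 d u : 0 <= vnorm d u.
Proof. apply sqrt_pos. Qed.

Lemma vnorm_sq d u : vnorm d u * vnorm d u = dot d u u.
Proof. unfold vnorm. rewrite sq_sum_eq. apply sqrt_sqrt, dot_ge0. Qed.

Lemma CS d u w : dot d u w * dot d u w <= dot d u u * dot d w w.
Proof.
  assert (Q : forall l, 0 <= dot d u u - 2 * l * dot d u w + l * l * dot d w w).
  { intros l. assert (0 <= dot d (fun k => u k - l * w k) (fun k => u k - l * w k)) by apply dot_ge0.
    unfold dot in *. replace (sumn_R d (fun k => (u k - l * w k) * (u k - l * w k))) with
      (sumn_R d (fun k => u k * u k + (-2 * l) * (u k * w k) + (l * l) * (w k * w k))) in H
      by (apply sumn_ext; intros; ring).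
    rewrite !sumn_plus, !sumn_scal in H. lra. }
  pose proof (dot_ge0 d u). pose proof (dot_ge0 d w).
  destruct (Req_dec (dot d w w) 0) as [E|E].
  - destruct (Req_dec (dot d u w) 0) as [E2|E2]. rewrite E2; nra.
    exfalso. pose proof (Q ((dot d u u + 1) / (2 * dot d u w))). rewrite E in H1.
    replace (2 * ((dot d u u + 1) / (2 * dot d u w)) * dot d u w) with (dot d u u + 1) in H1 by (field; auto). lra.
  - pose proof (Q (dot d u w / dot d w w)).
    assert (0 < dot d w w) by lra.
    replace (dot d u u - 2 * (dot d u w / dot d w w) * dot d u w +
      dot d u w / dot d w w * (dot d u w / dot d w w) * dot d w w) with
      ((dot d u u * dot d w w - dot d u w * dot d u w) / dot d w w) in H1 by (field; auto).
    apply Rmult_le_compat_r with (r := dot d w w) in H1; [|lra].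
    unfold Rdiv in H1. rewrite Rmult_assoc, Rinv_l, Rmult_0_l, Rmult_1_r in H1 by auto. lra.
Qed.

Lemma dot_le d u w : dot d u w <= vnorm d u * vnorm d w.
Proof. pose proof (CS d u w). pose proof (vnorm_sq d u). pose proof (vnorm_sq d w).
  pose proof (vnorm_ge0 d u). pose proof (vnorm_ge0 d w).
  assert (0 <= vnorm d u * vnorm d w) by nra.
  destruct (Rle_dec (dot d u w) (vnorm d u * vnorm d w)) as [h|h]; auto.
  exfalso. apply Rnot_le_lt in h. rewrite <- H0, <- H1 in H. nra. Qed.

Lemma vnorm_tri d u w : vnorm d (fun k => u k + w k) <= vnorm d u + vnorm d w.
Proof. pose proof (vnorm_sq d (fun k => u k + w k)). pose proof (vnorm_sq d u). pose proof (vnorm_sq d w).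
  pose proof (dot_le d u w). pose proof (vnorm_ge0 d u). pose proof (vnorm_ge0 d w).
  pose proof (vnorm_ge0 d (fun k => u k + w k)).
  assert (dot d (fun k => u k + w k) (fun k => u k + w k) = dot d u u + 2 * dot d u w + dot d w w).
  { unfold dot. rewrite <- sumn_scal, <- !sumn_plus. apply sumn_ext; intros; ring. }
  apply Rsqr_incr_0_var; unfold Rsqr; nra. Qed.

Lemma vnorm_ext d u w : (forall k, (k < d)%nat -> u k = w k) -> vnorm d u = vnorm d w.
Proof. intros H; unfold vnorm; f_equal; apply sumn_ext; intros; rewrite H; auto. Qed.

Lemma vnorm_scal d c u : vnorm d (fun k => c * u k) = Rabs c * vnorm d u.
Proof. unfold vnorm. rewrite <- sqrt_Rsqr_abs, <- sqrt_mult. f_equal.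
  rewrite <- sumn_scal. apply sumn_ext; intros; unfold Rsqr; ring.
  apply Rle_0_sqr. rewrite sq_sum_eq; apply dot_ge0. Qed.

Lemma vnorm_zero d : vnorm d (fun _ => 0) = 0.
Proof. unfold vnorm. rewrite sq_sum_eq. replace (dot d (fun _ => 0) (fun _ => 0)) with 0. apply sqrt_0.
  unfold dot. induction d; simpl; auto; rewrite <- IHd; ring. Qed.

Lemma vnorm_sum d n g : vnorm d (fun k => sumn_R n (fun j => g j k)) <= sumn_R n (fun j => vnorm d (g j)).
Proof. induction n; simpl. rewrite vnorm_zero; lra.
  eapply Rle_trans. apply (vnorm_tri d (fun k => sumn_R n (fun j => g j k)) (g n)). lra. Qed.

Lemma vsub_tri d p q r : vnorm d (vsub p r) <= vnorm d (vsub p q) + vnorm d (vsub q r).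
Proof. rewrite (vnorm_ext d (vsub p r) (fun k => vsub p q k + vsub q r k)).
  apply vnorm_tri. intros; unfold vsub; ring. Qed.

Lemma vsub_sym d p q : vnorm d (vsub p q) = vnorm d (vsub q p).
Proof. rewrite (vnorm_ext d (vsub p q) (fun k => (-1) * vsub q p k)).
  rewrite vnorm_scal. replace (Rabs (-1)) with 1. ring. rewrite Rabs_left; lra. intros; unfold vsub; ring. Qed.

Lemma cplus (f g : R -> R) x : continuous f x -> continuous g x -> continuous (fun y => f y + g y) x.
Proof. intros. apply (continuous_plus f g); auto. Qed.
Lemma cmult (f g : R -> R) x : continuous f x -> continuous g x -> continuous (fun y => f y * g y) x.
Proof. intros. apply (continuous_mult f g); auto. Qed.
Lemma copp (f : R -> R) x : continuous f x -> continuous (fun y => - f y) x.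
Proof. intros. apply (continuous_opp f); auto. Qed.
Lemma cminus (f g : R -> R) x : continuous f x -> continuous g x -> continuous (fun y => f y - g y) x.
Proof. intros. apply cplus; auto. apply copp; auto. Qed.
Lemma cconst (c x : R) : continuous (fun _ => c) x.
Proof. apply continuous_const. Qed.
Lemma cid (x : R) : continuous (fun y => y) x.
Proof. apply continuous_id. Qed.

Lemma cext (f g : R -> R) x : (forall y, f y = g y) -> continuous f x -> continuous g x.
Proof. intros E H. unfold continuous. rewrite <- E. eapply filterlim_ext; eauto. Qed.

Lemma cRmax (f g : R -> R) x : continuous f x -> continuous g x -> continuous (fun y => Rmax (f y) (g y)) x.
Proof. intros. apply cext with (fun y => (f y + g y + Rabs (f y - g y)) * / 2).
  intros y. unfold Rmax. destruct (Rle_dec (f y) (g y)).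
  rewrite Rabs_left1 by lra; lra. rewrite Rabs_right by lra; lra.
  apply cmult; [|apply cconst]. apply cplus. apply cplus; auto.
  apply (continuous_Rabs_comp (fun y => f y - g y)). apply cminus; auto. Qed.

Lemma csumn n (f : nat -> R -> R) x : (forall k, (k < n)%nat -> continuous (f k) x) ->
  continuous (fun y => sumn_R n (fun k => f k y)) x.
Proof. induction n; simpl; intros H. apply cconst. apply cplus. apply IHn; intros; apply H; lia. apply H; lia. Qed.

Lemma cmaxn n (f : nat -> R -> R) x : (forall k, (k < n)%nat -> continuous (f k) x) ->
  continuous (fun y => maxn_R n (fun k => f k y)) x.
Proof. induction n; intros H. apply cconst.
  destruct n. simpl. apply H; lia.
  apply cext with (fun y => Rmax (maxn_R (S n) (fun k => f k y)) (f (S n) y)). reflexivity.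
  apply cRmax. apply IHn; intros; apply H; lia. apply H; lia. Qed.

Lemma cvnorm d (u : R -> nat -> R) x : (forall k, (k < d)%nat -> continuous (fun y => u y k) x) ->
  continuous (fun y => vnorm d (u y)) x.
Proof. intros H. unfold vnorm. apply (continuous_sqrt_comp (fun y => sumn_R d (fun k => u y k ^ 2))).
  apply (csumn d (fun k y => u y k ^ 2)). intros k Hk.
  apply cext with (fun y => u y k * (u y k * 1)). intros; simpl; ring.
  apply cmult; auto. apply cmult; auto. apply cconst. Qed.

Lemma within_loc {T : UniformSpace} (f : T -> R) (D : T -> Prop) t l :
  filterlim f (within D (locally t)) (locally l) -> locally t D -> filterlim f (locally t) (locally l).
Proof. intros H HD P HP. specialize (H P HP). unfold filtermap, within in *.
  apply (filter_imp (fun x => D x /\ (D x -> P (f x)))). intros x [a b]; auto.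
  apply filter_and; auto. Qed.

Lemma loc_gt (t a : R) : a < t -> locally t (fun s => a <= s).
Proof. intros H. exists (mkposreal (t - a) ltac:(lra)). intros y Hy.
  unfold ball in Hy; simpl in Hy; unfold AbsRing_ball, abs, minus, plus, opp in Hy; simpl in Hy.
  apply Rabs_lt_between in Hy. simpl in Hy. lra. Qed.

Lemma loc_gt' (t a : R) : a < t -> locally t (fun s => a < s).
Proof. intros H. exists (mkposreal (t - a) ltac:(lra)). intros y Hy.
  unfold ball in Hy; simpl in Hy; unfold AbsRing_ball, abs, minus, plus, opp in Hy; simpl in Hy.
  apply Rabs_lt_between in Hy. simpl in Hy. lra. Qed.

Lemma fd_within_loc (f : R -> R) (D : R -> Prop) t l :
  locally t D -> filterdiff f (within D (locally t)) (fun h => scal h l) -> is_derive f t l.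
Proof. intros HD [Hlin H]. split; auto. intros x Hx.
  apply (@is_filter_lim_locally_unique R_AbsRing R_NormedModule) in Hx. subst x.
  assert (Hw : is_filter_lim (within D (locally t)) t).
  { intros P HP. unfold within. apply filter_imp with P; auto. }
  specialize (H t Hw). intros eps. specialize (H eps). unfold within in H.
  generalize (filter_and _ _ HD H). apply filter_imp. intros x [a b]; auto. Qed.

Lemma Rmax0_within t : filterlim (fun r => Rmax 0 r) (locally t) (within (fun s => 0 <= s) (locally (Rmax 0 t))).
Proof. intros P HP. unfold within in HP. unfold filtermap.
  assert (C : continuous (fun r => Rmax 0 r) t) by (apply cRmax; [apply cconst|apply cid]).
  specialize (C _ HP). unfold filtermap in C. revert C. apply filter_imp.
  intros x Hx. apply Hx. apply Rmax_l. Qed.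

Lemma exp_le' x y : x <= y -> exp x <= exp y.
Proof. intros [H|H]. left; apply exp_increasing; auto. subst; lra. Qed.

Lemma is_derive_sumn n (f : nat -> R -> R) df x : (forall k, (k < n)%nat -> is_derive (f k) x (df k)) ->
  is_derive (fun y => sumn_R n (fun k => f k y)) x (sumn_R n df).
Proof. induction n; simpl; intros H. apply (is_derive_const 0 x).
  apply (is_derive_plus (fun y => sumn_R n (fun k => f k y)) (f n)). apply IHn; intros; apply H; lia. apply H; lia. Qed.

Theorem lemma4p3
  (N d : nat) (sigma tau beta : R) (psi : R -> R)
  (x0 v0 x v : nat -> R -> nat -> R)
  (HN : (2 <= N)%nat) (Hd : (1 <= d)%nat)
  (Hsigma : 0 <= sigma) (Hsigtau : sigma <= tau) (Hbeta : 0 < beta)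
  (* psi : [0,oo) -> [0,oo) continuous, nonincreasing, positive, sup psi <= 1 *)
  (Hpsi_cont : forall r, 0 <= r ->
      filterlim psi (within (fun s => 0 <= s) (locally r)) (locally (psi r)))
  (Hpsi_mono : forall r s, 0 <= r -> r <= s -> psi s <= psi r)
  (Hpsi_pos : forall r, 0 <= r -> 0 < psi r)
  (Hpsi_le1 : forall r, 0 <= r -> psi r <= 1)
  (* initial data: x0 in C^1([-tau,0]), v0 in C([-tau,0]), d/dt x0 = v0 *)
  (Hv0_cont : forall i k t, (i < N)%nat -> (k < d)%nat -> -tau <= t <= 0 ->
      filterlim (fun s => v0 i s k) (within (fun s => -tau <= s <= 0) (locally t))
                (locally (v0 i t k)))
  (Hx0_der : forall i k t, (i < N)%nat -> (k < d)%nat -> -tau <= t <= 0 ->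
      filterdiff (fun s => x0 i s k) (within (fun s => -tau <= s <= 0) (locally t))
                 (fun h => scal h (v0 i t k)))
  (* the solution agrees with the initial data on [-tau,0] *)
  (Hx_init : forall i k t, (i < N)%nat -> (k < d)%nat -> -tau <= t <= 0 ->
      x i t k = x0 i t k)
  (Hv_init : forall i k t, (i < N)%nat -> (k < d)%nat -> -tau <= t <= 0 ->
      v i t k = v0 i t k)
  (* global solution: x, v continuous on [-tau,oo), dx/dt = v and the
     delayed Cucker-Smale velocity equation for t > 0 *)
  (Hx_cont : forall i k t, (i < N)%nat -> (k < d)%nat -> -tau <= t ->
      filterlim (fun s => x i s k) (within (fun s => -tau <= s) (locally t))
                (locally (x i t k)))
  (Hv_cont : forall i k t, (i < N)%nat -> (k < d)%nat -> -tau <= t ->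
      filterlim (fun s => v i s k) (within (fun s => -tau <= s) (locally t))
                (locally (v i t k)))
  (Hx_der : forall i k t, (i < N)%nat -> (k < d)%nat -> 0 < t ->
      is_derive (fun s => x i s k) t (v i t k))
  (Hv_der : forall i k t, (i < N)%nat -> (k < d)%nat -> 0 < t ->
      is_derive (fun s => v i s k) t (rhs N d sigma tau psi x v i t k))
  (* v_i continuously differentiable on [0,oo) (one-sided at 0) *)
  (Hv_C1 : forall i k, (i < N)%nat -> (k < d)%nat ->
      exists w : R -> R,
        forall t, 0 <= t ->
          filterdiff (fun s => v i s k) (within (fun s => 0 <= s) (locally t))
                     (fun h => scal h (w t))
          /\ filterlim w (within (fun s => 0 <= s) (locally t)) (locally (w t))) :
  forall i j t, (i < N)%nat -> (j < N)%nat -> 2 * tau <= t ->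
    vnorm d (vsub (v j (t - tau)) (v i (t - sigma)))
    <= dv N d v (t - tau)
       + RInt (fun s => dv N d v (s - tau)) (t - tau) (t - sigma)
       + / beta * exp (2 * tau) * Gfun N d tau beta v (t - sigma).
Proof.
  intros i j t Hi Hj Ht.
  assert (HN0 : (0 < N)%nat) by lia.
  assert (Hdv : forall s i j, (i < N)%nat -> (j < N)%nat -> vnorm d (vsub (v i s) (v j s)) <= dv N d v s).
  { intros s i0 j0 Hi0 Hj0. unfold dv. eapply Rle_trans; [|apply (maxn_ge N _ i0 Hi0)]. simpl.
    apply (maxn_ge N (fun j => vnorm d (vsub (v i0 s) (v j s))) j0 Hj0). }
  assert (Hdv0 : forall s, 0 <= dv N d v s).
  { intros s. eapply Rle_trans; [apply vnorm_ge0|apply (Hdv s 0%nat 0%nat HN0 HN0)]. }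
  destruct (Req_dec tau 0) as [Ht0|Ht0].
  { assert (sigma = 0) by lra. subst tau sigma. rewrite !Rminus_0_r, RInt_point. unfold Gfun.
    rewrite Rmult_0_r, Rminus_0_r, Rmax_right by lra. rewrite RInt_point. unfold zero; simpl.
    rewrite exp_0. pose proof (Hdv t j i Hj Hi). pose proof (Hdv0 t).
    assert (0 <= / beta) by (left; apply Rinv_0_lt_compat; auto). nra. }
  assert (Htau : 0 < tau) by lra.
  assert (Hc : forall i k, exists w : R -> R, (i < N)%nat -> (k < d)%nat -> forall t, 0 <= t ->
          filterdiff (fun s => v i s k) (within (fun s => 0 <= s) (locally t)) (fun h => scal h (w t))
          /\ filterlim w (within (fun s => 0 <= s) (locally t)) (locally (w t))).
  { intros i0 k. destruct (Compare_dec.lt_dec i0 N) as [h1|h1]; [destruct (Compare_dec.lt_dec k d) as [h2|h2]|].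
    destruct (Hv_C1 i0 k h1 h2) as [w Hw]; exists w; auto.
    exists (fun _ => 0); intros; lia. exists (fun _ => 0); intros; lia. }
  set (W := fun i k => proj1_sig (constructive_indefinite_description _ (Hc i k))).
  assert (HW : forall i k, (i < N)%nat -> (k < d)%nat -> forall t, 0 <= t ->
          filterdiff (fun s => v i s k) (within (fun s => 0 <= s) (locally t)) (fun h => scal h (W i k t))
          /\ filterlim (W i k) (within (fun s => 0 <= s) (locally t)) (locally (W i k t))).
  { intros i0 k. unfold W. apply (proj2_sig (constructive_indefinite_description _ (Hc i0 k))). }
  clearbody W. clear Hc.
  set (Wc := fun i k r => W i k (Rmax 0 r)).
  assert (HWc_cont : forall i k r, (i < N)%nat -> (k < d)%nat -> continuous (Wc i k) r).
  { intros i0 k r h1 h2. unfold continuous, Wc.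
    eapply filterlim_comp. apply Rmax0_within. apply (HW i0 k h1 h2). apply Rmax_l. }
  assert (HWc_der : forall i k r, (i < N)%nat -> (k < d)%nat -> 0 < r -> is_derive (fun s => v i s k) r (Wc i k r)).
  { intros i0 k r h1 h2 h3. unfold Wc. rewrite Rmax_right by lra.
    apply fd_within_loc with (fun s => 0 <= s). apply loc_gt; auto. apply (HW i0 k h1 h2); lra. }
  assert (Hrhs : forall i k r, (i < N)%nat -> (k < d)%nat -> 0 < r -> Wc i k r = rhs N d sigma tau psi x v i r k).
  { intros i0 k r h1 h2 h3. rewrite <- (is_derive_unique _ _ _ (HWc_der i0 k r h1 h2 h3)).
    apply is_derive_unique, Hv_der; auto. }
  set (Mt := fun r => maxn_R N (fun i => vnorm d (fun k => Wc i k r))).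
  assert (HMt_cont : forall r, continuous Mt r).
  { intros r. unfold Mt. apply (cmaxn N (fun i r => vnorm d (fun k => Wc i k r))). intros i0 h.
    apply (cvnorm d (fun r k => Wc i0 k r)). intros k hk. apply HWc_cont; auto. }
  assert (HMt_ge : forall r i, (i < N)%nat -> vnorm d (fun k => Wc i k r) <= Mt r).
  { intros r i0 h. unfold Mt. apply (maxn_ge N (fun i => vnorm d (fun k => Wc i k r))); auto. }
  assert (HMt0 : forall r, 0 <= Mt r).
  { intros r. eapply Rle_trans; [apply vnorm_ge0|apply (HMt_ge r 0%nat HN0)]. }
  assert (HM_eq : forall r, 0 < r -> maxvdot N d v r = Mt r).
  { intros r hr. unfold maxvdot, Mt. apply maxn_ext. intros i0 h. apply vnorm_ext. intros k hk.
    unfold vderiv. apply is_derive_unique, HWc_der; auto. }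
  assert (HMt_int : forall a b, ex_RInt Mt a b).
  { intros a b. apply (@ex_RInt_continuous R_CompleteNormedModule). intros; apply HMt_cont. }
  set (P := fun y : R => (RInt Mt 0 y : R)).
  assert (HP_der : forall y, is_derive P y (Mt y)).
  { intros y. apply (@is_derive_RInt R_CompleteNormedModule Mt P 0 y). apply filter_forall. intros z. apply RInt_correct, HMt_int. apply HMt_cont. }
  assert (HP_cont : forall y, continuous P y).
  { intros y. apply (@ex_derive_continuous R_AbsRing R_NormedModule). eexists; apply HP_der. }
  assert (HP_diff : forall a b, RInt Mt a b = P b - P a).
  { intros a b. unfold P. rewrite <- (RInt_Chasles Mt 0 a b) by apply HMt_int. unfold plus; simpl. lra. }
  assert (HP_mono : forall a b, a <= b -> P a <= P b).
  { intros a b h. assert (0 <= RInt Mt a b) by (apply RInt_ge_0; auto; intros; apply HMt0).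
    rewrite HP_diff in H; lra. }
  assert (Hv_loc : forall i k s, (i < N)%nat -> (k < d)%nat -> -tau < s -> continuous (fun u => v i u k) s).
  { intros i0 k s h1 h2 h3. apply within_loc with (fun s => -tau <= s). apply Hv_cont; auto; lra.
    apply loc_gt; auto. }
  assert (HFTC : forall i p q, (i < N)%nat -> 0 <= p <= q -> vnorm d (vsub (v i p) (v i q)) <= P q - P p).
  { intros i0 p q h1 [hp hq].
    set (Dv := fun k => v i0 q k - v i0 p k).
    set (nD := vnorm d Dv).
    set (phi := fun r => sumn_R d (fun k => Dv k * v i0 r k) - nD * P r).
    destruct (MVT_gen phi p q (fun r => sumn_R d (fun k => Dv k * Wc i0 k r) - nD * Mt r)) as [c [Hc Heq]].
    - intros r Hr. rewrite Rmin_left, Rmax_right in Hr by lra. unfold phi.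
      apply (is_derive_minus (fun r => sumn_R d (fun k => Dv k * v i0 r k)) (fun r => nD * P r)).
      apply (is_derive_sumn d (fun k r => Dv k * v i0 r k)). intros k hk.
      apply is_derive_scal. apply HWc_der; auto; lra.
      apply is_derive_scal. apply HP_der.
    - intros r Hr. rewrite Rmin_left, Rmax_right in Hr by lra. apply continuity_pt_filterlim.
      apply cminus. apply (csumn d (fun k r => Dv k * v i0 r k)). intros k hk.
      apply cmult. apply cconst. apply Hv_loc; auto; lra.
      apply cmult. apply cconst. apply HP_cont.
    - assert (Hneg : sumn_R d (fun k => Dv k * Wc i0 k c) - nD * Mt c <= 0).
      { pose proof (dot_le d Dv (fun k => Wc i0 k c)). unfold dot in H.
        pose proof (HMt_ge c i0 h1). pose proof (vnorm_ge0 d Dv). fold nD in H, H1.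
        assert (nD * vnorm d (fun k => Wc i0 k c) <= nD * Mt c) by (apply Rmult_le_compat_l; auto). lra. }
      assert (Hphi : phi q - phi p = nD * nD - nD * (P q - P p)).
      { unfold phi. pose proof (vnorm_sq d Dv) as Esq. fold nD in Esq. unfold dot in Esq.
        assert (sumn_R d (fun k => Dv k * v i0 q k) = sumn_R d (fun k => Dv k * v i0 p k) + sumn_R d (fun k => Dv k * Dv k)).
        { rewrite <- sumn_plus. apply sumn_ext. intros; unfold Dv; ring. }
        lra. }
      assert (phi q - phi p <= 0).
      { rewrite Heq. apply Rmult_le_0_r; lra. }
      pose proof (HP_mono p q hq). pose proof (vnorm_ge0 d Dv). fold nD in H1.
      rewrite vsub_sym. replace (vnorm d (vsub (v i0 q) (v i0 p))) with nD by (apply vnorm_ext; intros; unfold Dv, vsub; auto).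
      destruct (Req_dec nD 0) as [E|E]. lra.
      assert (nD * (nD - (P q - P p)) <= 0) by nra.
      assert (0 < nD) by lra.
      destruct (Rle_dec nD (P q - P p)); auto. nra. }
  assert (HN1 : 0 < INR (N - 1)).
  { rewrite minus_INR by lia. apply le_INR in HN. replace (INR 2) with 2 in HN by (simpl; lra). simpl. lra. }
  assert (HM3 : forall r, tau <= r -> Mt r <= dv N d v (r - tau) + (P (r - sigma) - P (r - tau))).
  { intros r hr. set (B := dv N d v (r - tau) + (P (r - sigma) - P (r - tau))).
    unfold Mt. apply maxn_le; [lia|]. intros i0 h0.
    rewrite (vnorm_ext d _ (fun k => rhs N d sigma tau psi x v i0 r k)) by (intros; apply Hrhs; auto; lra).
    unfold rhs. eapply Rle_trans. apply (vnorm_sum d N (fun j k => if Nat.eqb j i0 then 0 else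
        aw N d sigma tau psi x i0 j r * (v j (r - tau) k - v i0 (r - sigma) k))).
    eapply Rle_trans. apply (sumn_le N _ (fun j => if Nat.eqb j i0 then 0 else / INR (N - 1) * B)).
    - intros j0 hj. destruct (Nat.eqb j0 i0).
      + rewrite vnorm_zero; lra.
      + rewrite vnorm_scal.
        assert (Hu : vnorm d (fun k => v j0 (r - tau) k - v i0 (r - sigma) k) <= B).
        { eapply Rle_trans. apply (vsub_tri d (v j0 (r - tau)) (v i0 (r - tau)) (v i0 (r - sigma))).
          unfold B. apply Rplus_le_compat. apply Hdv; auto. apply HFTC; auto; lra. }
        unfold aw. pose proof (vnorm_ge0 d (vsub (x i0 (r - sigma)) (x j0 (r - tau)))) as g.
        pose proof (Hpsi_pos _ g). pose proof (Hpsi_le1 _ g).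
        assert (0 < / INR (N - 1)) by (apply Rinv_0_lt_compat; auto).
        rewrite Rabs_right by (apply Rle_ge; apply Rmult_le_pos; lra).
        pose proof (vnorm_ge0 d (fun k => v j0 (r - tau) k - v i0 (r - sigma) k)).
        set (ps := psi (vnorm d (vsub (x i0 (r - sigma)) (x j0 (r - tau))))) in *.
        set (nu := vnorm d (fun k => v j0 (r - tau) k - v i0 (r - sigma) k)) in *.
        set (c := / INR (N - 1)) in *.
        assert (ps * nu <= 1 * B) by (apply Rmult_le_compat; lra).
        nra.
    - rewrite sumn_count. rewrite (proj2 (Nat.ltb_lt i0 N)) by auto.
      rewrite minus_INR in HN1 |- * by lia. simpl in HN1 |- *. right. field. lra. }
  assert (Hdvc : forall u, -tau < u -> continuous (dv N d v) u).
  { intros u hu. unfold dv. apply (cmaxn N (fun i s => maxn_R N (fun j => vnorm d (vsub (v i s) (v j s))))).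
    intros i0 h0. apply (cmaxn N (fun j s => vnorm d (vsub (v i0 s) (v j s)))). intros j0 hj0.
    apply (cvnorm d (fun s k => vsub (v i0 s) (v j0 s) k)). intros k hk. unfold vsub.
    apply cminus; apply Hv_loc; auto. }
  unfold Gfun.
  set (a := t - tau) in *. set (b := t - sigma) in *.
  assert (hab : a <= b) by (unfold a, b; lra).
  assert (ha : tau <= a) by (unfold a; lra).
  set (D := fun s => dv N d v (s - tau)).
  set (H := fun r => P (r - sigma) - P (r - tau)).
  assert (HDc : forall z, a <= z -> continuous D z).
  { intros z hz. unfold D. apply (continuous_comp (fun s => s - tau) (dv N d v)).
    apply cminus. apply cid. apply cconst. apply Hdvc. lra. }
  assert (HHc : forall z, continuous H z).
  { intros z. unfold H. apply cminus.
    apply (continuous_comp (fun s => s - sigma) P). apply cminus; [apply cid|apply cconst]. apply HP_cont.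
    apply (continuous_comp (fun s => s - tau) P). apply cminus; [apply cid|apply cconst]. apply HP_cont. }
  assert (HDi : ex_RInt D a b).
  { apply (@ex_RInt_continuous R_CompleteNormedModule). intros z hz. rewrite Rmin_left in hz by lra. apply HDc; lra. }
  assert (HHi : forall p q, ex_RInt H p q).
  { intros p q. apply (@ex_RInt_continuous R_CompleteNormedModule). intros z hz. apply HHc. }
  assert (Step4 : P b - P a <= RInt D a b + RInt H a b).
  { rewrite <- HP_diff.
    assert (E : RInt (fun r => D r + H r) a b = RInt D a b + RInt H a b).
    { apply (RInt_plus D H a b HDi (HHi a b)). }
    rewrite <- E. apply RInt_le; auto.
    apply (@ex_RInt_continuous R_CompleteNormedModule). intros z hz. rewrite Rmin_left in hz by lra.
    apply cplus. apply HDc; lra. apply HHc.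
    intros r hr. unfold D, H. apply HM3. lra. }
  set (L := Rmax 0 (b - 2 * tau)).
  assert (hL0 : 0 <= L) by apply Rmax_l.
  assert (hL1 : L <= a - tau). { unfold L, a, b. apply Rmax_lub; lra. }
  set (Kt := fun s => exp (- (b - s)) * (P b - P s)).
  assert (HKc : forall z, continuous Kt z).
  { intros z. unfold Kt. apply cmult. apply (continuous_exp_comp (fun s => - (b - s))).
    apply copp, cminus; [apply cconst|apply cid]. apply cminus. apply cconst. apply HP_cont. }
  assert (HKi : forall p q, ex_RInt Kt p q).
  { intros p q. apply (@ex_RInt_continuous R_CompleteNormedModule). intros z hz. apply HKc. }
  assert (EK : RInt (fun s => exp (- (b - s)) * RInt (fun r => maxvdot N d v r) s b) L b = RInt Kt L b).
  { apply RInt_ext. intros s hs. rewrite Rmin_left, Rmax_right in hs by lra. unfold Kt. f_equal.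
    rewrite <- HP_diff. apply RInt_ext. intros y hy. rewrite Rmin_left, Rmax_right in hy by lra.
    apply HM_eq. lra. }
  rewrite EK.
  assert (Step5a : RInt H a b = RInt (fun y => H (y + tau)) (a - tau) (b - tau)).
  { pose proof (RInt_comp_lin H 1 tau (a - tau) (b - tau) (HHi _ _)) as E.
    replace (1 * (a - tau) + tau) with a in E by ring. replace (1 * (b - tau) + tau) with b in E by ring.
    rewrite <- E. apply RInt_ext. intros y _. unfold scal; simpl; unfold mult; simpl. rewrite Rmult_1_l. f_equal. ring. }
  assert (Step5b : RInt (fun y => H (y + tau)) (a - tau) (b - tau) <= exp (2 * tau) * RInt Kt (a - tau) (b - tau)).
  { assert (E : RInt (fun y => exp (2 * tau) * Kt y) (a - tau) (b - tau) = exp (2 * tau) * RInt Kt (a - tau) (b - tau)).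
    { apply (RInt_scal Kt (a - tau) (b - tau) (exp (2 * tau)) (HKi _ _)). }
    rewrite <- E. apply RInt_le. lra.
    apply (@ex_RInt_continuous R_CompleteNormedModule). intros z hz.
    apply (continuous_comp (fun y => y + tau) H). apply cplus; [apply cid|apply cconst]. apply HHc.
    apply (@ex_RInt_continuous R_CompleteNormedModule). intros z hz. apply cmult. apply cconst. apply HKc.
    intros y hy. unfold H, Kt. replace (y + tau - tau) with y by ring.
    assert (e1 : exp (- (2 * tau)) <= exp (- (b - y))) by (apply exp_le'; unfold a, b in *; lra).
    assert (e2 : exp (2 * tau) * exp (- (2 * tau)) = 1) by (rewrite <- exp_plus; replace (2 * tau + - (2 * tau)) with 0 by ring; apply exp_0).
    pose proof (HP_mono (y + tau - sigma) b ltac:(unfold a, b in *; lra)).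
    pose proof (HP_mono y (y + tau - sigma) ltac:(lra)).
    pose proof (exp_pos (2 * tau)). pose proof (exp_pos (- (2 * tau))).
    assert (exp (- (2 * tau)) * (P (y + tau - sigma) - P y) <= exp (- (b - y)) * (P b - P y))
      by (apply Rmult_le_compat; lra).
    assert (HH4 : exp (2 * tau) * (exp (- (2 * tau)) * (P (y + tau - sigma) - P y)) <= exp (2 * tau) * (exp (- (b - y)) * (P b - P y)))
      by (apply Rmult_le_compat_l; lra).
    rewrite <- Rmult_assoc, e2, Rmult_1_l in HH4. exact HH4. }
  assert (Step5c : RInt Kt (a - tau) (b - tau) <= RInt Kt L b).
  { assert (Kt0 : forall s, s <= b -> 0 <= Kt s).
    { intros s hs. unfold Kt. apply Rmult_le_pos. left; apply exp_pos. pose proof (HP_mono s b hs). lra. }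
    rewrite <- (RInt_Chasles Kt L (a - tau) b) by apply HKi.
    rewrite <- (RInt_Chasles Kt (a - tau) (b - tau) b) by apply HKi.
    assert (0 <= RInt Kt L (a - tau)) by (apply RInt_ge_0; auto; intros; apply Kt0; unfold a, b in *; lra).
    assert (0 <= RInt Kt (b - tau) b) by (apply RInt_ge_0; [lra|auto|]; intros; apply Kt0; lra).
    unfold plus; simpl. lra. }
  assert (Hfirst : vnorm d (vsub (v j a) (v i b)) <= dv N d v a + (P b - P a)).
  { eapply Rle_trans. apply (vsub_tri d (v j a) (v i a) (v i b)).
    apply Rplus_le_compat. apply Hdv; auto. apply HFTC; auto; lra. }
  pose proof (Hdv0 b). pose proof (exp_pos (2 * tau)).
  assert (0 < / beta) by (apply Rinv_0_lt_compat; auto).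
  assert (E : / beta * exp (2 * tau) * (dv N d v b + beta * RInt Kt L b) =
              / beta * exp (2 * tau) * dv N d v b + exp (2 * tau) * RInt Kt L b) by (field; apply Rgt_not_eq; exact Hbeta).
  rewrite E.
  assert (0 <= / beta * exp (2 * tau) * dv N d v b) by (apply Rmult_le_pos; [apply Rmult_le_pos|]; lra).
  assert (exp (2 * tau) * RInt Kt (a - tau) (b - tau) <= exp (2 * tau) * RInt Kt L b) by (apply Rmult_le_compat_l; lra).
  lra.
Qed.
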